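(* Let $f$ be a scale mixture of normals (SMN) density with shape parameter $\delta\in\Delta\subset\mathbb{R}$, i.e. $f(z\mid\delta)=\int_{\mathbb{R}_+}\tau^{1/2}\phi(\tau^{1/2}z)\,dH(\tau\mid\delta)$, where $\phi$ is the standard normal density and $H(\cdot\mid\delta)$ is a mixing distribution on $\mathbb{R}_+$. Consider the linear regression model $y_j={\bf x}_j^{\top}\bm\beta+\varepsilon_j$, $j=1,\dots,n$, where $\bm\beta\in\mathbb{R}^p$, ${\bf X}=({\bf x}_1^\top,\dots,{\bf x}_n^\top)^\top$ is a known $n\times p$ design matrix of full column rank, and $\varepsilon_j\stackrel{i.i.d.}{\sim}\mathrm{TP}(0,\sigma,\delta,\gamma;f)$. Adopt the prior $\pi(\bm\beta,\sigma,\delta,\gamma)\propto \pi(\gamma)\pi(\delta)/\sigma^{q}$ with $q\ge 0$ and $\pi(\gamma)$, $\pi(\delta)$ proper priors on $\Gamma$ and $\Delta$. Consider the conditions: (i) the posterior of $(\bm\beta,\sigma,\delta)$ associated with the linear regression model $y_j={\bf x}_j^\top\bm\beta+\varepsilon_j$ with errors $\varepsilon_j$ i.i.d. with symmetric density $\sigma^{-1}f(\cdot/\sigma\mid\delta)$, together with the prior $\pi(\bm\beta,\sigma,\delta)\propto\sigma^{-q}\pi(\delta)$, is proper; (ii) $\int_{\Gamma}\frac{h(\gamma)^{n+q-1}}{[a(\gamma)+b(\gamma)]^n}\pi(\gamma)\,d\gamma<\infty$, where $h(\gamma)=\min\{a(\gamma),b(\gamma)\}$; (iii) $\int_{\Gamma}\frac{H(\gamma)^{n+q-1}}{[a(\gamma)+b(\gamma)]^n}\pi(\gamma)\,d\gamma<\infty$,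 where $H(\gamma)=\max\{a(\gamma),b(\gamma)\}$. Then (i) and (ii) are necessary conditions, and (i) and (iii) are sufficient conditions, for the propriety of the posterior distribution of $(\bm\beta,\sigma,\delta,\gamma)$.
   Context: The two-piece distribution $\mathrm{TP}(\mu,\sigma,\delta,\gamma;f)$, for a symmetric density $f(\cdot\mid\delta)$ on $\mathbb{R}$ with mode at $0$, has density $g(z\mid\mu,\sigma,\delta,\gamma)=\frac{2}{\sigma[a(\gamma)+b(\gamma)]}\left[f\!\left(\frac{z-\mu}{\sigma b(\gamma)}\Big|\delta\right)I(z<\mu)+f\!\left(\frac{z-\mu}{\sigma a(\gamma)}\Big|\delta\right)I(z\ge\mu)\right]$, $z\in\mathbb{R}$, where $\mu\in\mathbb{R}$, $\sigma>0$, $\gamma\in\Gamma\subset\mathbb{R}$ is a skewness parameter and $a(\cdot),b(\cdot)$ are given positive functions on $\Gamma$. The likelihood is $\prod_{j=1}^n g(y_j-{\bf x}_j^\top\bm\beta\mid 0,\sigma,\delta,\gamma)$, and the posterior is the (possibly improper) product of likelihood and prior; ''proper'' means that this product has finite integral over the parameter space. *)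

(* Defs.v *)
From mathcomp Require Import all_boot all_order all_algebra.
From mathcomp Require Import all_classical all_reals all_analysis.
Set Implicit Arguments. Unset Strict Implicit. Unset Printing Implicit Defensive.
Import Order.TTheory GRing.Theory Num.Theory.
Local Open Scope ring_scope.
Local Open Scope classical_set_scope.

Section Defs.
Variable R : realType.

Definition smn_density (H : R.-pker R ~> R) (z delta : R) : \bar R :=
  (\int[H delta]_(t in `]0%R, +oo[) (Num.sqrt t * normal_pdf 0 1 (Num.sqrt t * z))%:E)%E.

Definition tp_density (f : R -> R -> \bar R) (a b : R -> R)
    (mu sigma delta gamma z : R) : \bar R :=
  (((2 / (sigma * (a gamma + b gamma)))%:E) *
    (if (z < mu)%R then f ((z - mu) / (sigma * b gamma))%R delta
     else f ((z - mu) / (sigma * a gamma))%R delta))%E.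

(* Lebesgue integral over R^k, written as an iterated integral (vectors are
   sequences of length k, first coordinate integrated outermost). *)
Fixpoint int_Rk (k : nat) (F : seq R -> \bar R) : \bar R :=
  match k with
  | 0 => F [::]
  | k'.+1 => (\int[@lebesgue_measure R]_(x in [set: R]) int_Rk k' (fun s => F (x :: s)))%E
  end.

Definition lin_pred (n p : nat) (X : 'M[R]_(n, p)) (beta : seq R) (j : 'I_n) : R :=
  \sum_(i < p) X j i * nth 0 beta i.

Definition post_mass_TP (n p : nat) (X : 'M[R]_(n, p)) (y : 'I_n -> R)
    (f : R -> R -> \bar R) (a b : R -> R) (q : R)
    (Delta Gamma : set R) (pi_delta pi_gamma : R -> R) : \bar R :=
  (\int[@lebesgue_measure R]_(gamma in Gamma)
   \int[@lebesgue_measure R]_(delta in Delta)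
   \int[@lebesgue_measure R]_(sigma in `]0%R, +oo[)
    int_Rk p (fun beta =>
      (\prod_(j < n) tp_density f a b 0%R sigma delta gamma (y j - lin_pred X beta j)%R) *
      (sigma `^ (- q) * pi_delta delta * pi_gamma gamma)%:E))%E.

Definition post_mass_sym (n p : nat) (X : 'M[R]_(n, p)) (y : 'I_n -> R)
    (f : R -> R -> \bar R) (q : R) (Delta : set R) (pi_delta : R -> R) : \bar R :=
  (\int[@lebesgue_measure R]_(delta in Delta)
   \int[@lebesgue_measure R]_(sigma in `]0%R, +oo[)
    int_Rk p (fun beta =>
      (\prod_(j < n) ((sigma^-1)%:E * f ((y j - lin_pred X beta j) / sigma)%R delta)) *
      (sigma `^ (- q) * pi_delta delta)%:E))%E.

End Defs.

(* Main.v *)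
Require Import Defs.
From HB Require Import structures.
From mathcomp Require Import all_boot all_order all_algebra.
From mathcomp Require Import all_classical all_reals all_analysis.
From mathcomp Require Import measurable_realfun.
Import Order.TTheory GRing.Theory Num.Theory.
Import numFieldNormedType.Exports.
Local Open Scope ring_scope.
Local Open Scope classical_set_scope.
Set Implicit Arguments. Unset Strict Implicit. Unset Printing Implicit Defensive.
From mathcomp Require Import ring lra.
Section A.
Local Open Scope ereal_scope.
Context d (T : measurableType d) (R : realType).
Variable mu : {measure set T -> \bar R}.
Import HBNNSimple.

Lemma sup_le_int (D1 D2 : set T) (f g : T -> \bar R) :
  D1 `<=` D2 -> (forall x, D1 x -> 0 <= f x) -> (forall x, D2 x -> 0 <= g x) ->
  (forall x, D1 x -> f x <= g x) ->
  \int[mu]_(x in D1) f x <= \int[mu]_(x in D2) g x.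
Proof.
move=> D12 f0 g0 fg; rewrite !ge0_integralE//.
apply: le_ereal_sup => _ [h hf <-]; exists h => //= x.
apply: (le_trans (hf x)); rewrite /patch.
case: ifPn => [/set_mem D1x|_].
  by rewrite ifT ?inE; [exact: fg|exact: D12].
by case: ifPn => [/set_mem/g0|].
Qed.

Lemma sup_int_scale_le (D : set T) (f : T -> \bar R) (r : R) : (0 < r)%R ->
  (forall x, D x -> 0 <= f x) ->
  \int[mu]_(x in D) (r%:E * f x) <= r%:E * \int[mu]_(x in D) f x.
Proof.
move=> r0 f0.
have rf0 : forall x, D x -> 0 <= r%:E * f x by move=> x Dx; apply: mule_ge0; [rewrite lee_fin ltW|exact: f0].
rewrite (@ge0_integralE _ _ _ mu D _ rf0) (@ge0_integralE _ _ _ mu D _ f0).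
apply: ge_ereal_sup => _ [h hf <-].
have ri0 : (0 <= r^-1)%R by rewrite invr_ge0 ltW.
pose h' := scale_nnsfun h ri0.
have -> : sintegral mu h = r%:E * sintegral mu h'.
  rewrite /h' /scale_nnsfun /= sintegralrM muleA -EFinM divff ?gt_eqF// mul1e.
  by apply: eq_sintegral => x.
rewrite lee_pmul2l ?lte_fin//. apply: ereal_sup_ubound; exists h' => //= x.
rewrite /h' /= /patch; have := hf x; rewrite /patch; case: ifPn => _.
  rewrite EFinM => hx; rewrite -(@lee_pmul2l _ r%:E) ?lte_fin// muleA -EFinM.
  by rewrite divff ?gt_eqF// mul1r.
rewrite [point]/(0%E) => hx; rewrite EFinM mule_ge0_le0// ?lee_fin ?ri0//.
Qed.

Lemma sup_int_scale (D : set T) (f : T -> \bar R) (r : R) : (0 < r)%R ->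
  (forall x, D x -> 0 <= f x) ->
  \int[mu]_(x in D) (r%:E * f x) = r%:E * \int[mu]_(x in D) f x.
Proof.
move=> r0 f0; apply/eqP; rewrite eq_le sup_int_scale_le//=.
have ri0 : (0 < r^-1)%R by rewrite invr_gt0.
have := @sup_int_scale_le D (fun x => r%:E * f x) _ ri0.
under eq_integral do rewrite muleA -EFinM mulVf ?gt_eqF// mul1e.
have rf0 : forall x, D x -> 0 <= r%:E * f x by move=> x Dx; apply: mule_ge0; [rewrite lee_fin ltW|exact: f0].
move=> /(_ rf0).
by rewrite -(@lee_pmul2l _ r%:E) ?lte_fin// muleA -EFinM divff ?gt_eqF// mul1e.
Qed.
End A.
Section B.
Local Open Scope ereal_scope.
Context (R : realType).
Local Notation leb := (@lebesgue_measure R).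

Lemma measurable_divc (c : R) : measurable_fun [set: measurableTypeR R]
  ((fun x : R => x / c)%R : measurableTypeR R -> measurableTypeR R).
Proof. exact: mulrr_measurable. Qed.

Lemma leb_dil (c : R) (c0 : (0 < c)%R) (A : set R) : measurable A ->
  leb ((fun x => x / c)%R @^-1` A) = c%:E * leb A.
Proof.
move=> mA.
have ci0 : (0 <= c^-1)%R by rewrite invr_ge0 ltW.
pose pf := measure_function_pushforward__canonical__measure_function_Measure leb (measurable_divc c).
have := @lebesgue_measure_unique R (mscale (NngNum ci0) pf) _ A mA.
rewrite /= /mscale /pf /pushforward /= => ->.
  by rewrite muleA -EFinM divff ?gt_eqF// mul1e.
move=> _ [[u v]] _ <-.
rewrite /mscale /pushforward /=.
have -> : (fun x : R => x / c)%R @^-1` `]u, v] = `](u * c)%R, (v * c)%R].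
  apply/seteqP; split => x /=; rewrite !in_itv/= ler_pdivrMr// ltr_pdivlMr//.
rewrite !lebesgue_measure_itv/= !lte_fin ltr_pM2r//.
case: ifPn => _; last by rewrite mule0.
by rewrite -EFinD -EFinM -mulrBl mulrCA mulVf ?gt_eqF// mulr1.
Qed.
End B.
Section dilsf.
Context (R : realType) (c : R) (h : {nnsfun measurableTypeR R >-> R}).
Import HBNNSimple.
Definition dilf : measurableTypeR R -> R := fun x => h (x / c)%R.
Lemma dilf_meas : measurable_fun [set: measurableTypeR R] dilf.
Proof.
apply: (@measurableT_comp _ _ _ _ _ _ h _ (fun x : measurableTypeR R => x / c)%R).
  exact: measurable_funPT.
exact: measurable_divc.
Qed.
HB.instance Definition _ := isMeasurableFun.Build _ _ _ _ dilf dilf_meas.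
Lemma dilf_fin : finite_set (range dilf).
Proof.
apply: (sub_finite_set _ (@fimfunP _ _ h)) => _ [x _ <-]; by exists (x / c)%R.
Qed.
HB.instance Definition _ := FiniteImage.Build _ _ dilf dilf_fin.
Lemma dilf_ge0 x : (0 <= dilf x)%R. Proof. by rewrite /dilf. Qed.
HB.instance Definition _ := isNonNegFun.Build _ _ dilf dilf_ge0.
Definition dil_nnsfun : {nnsfun measurableTypeR R >-> R} := dilf.
End dilsf.
Section D.
Local Open Scope ereal_scope.
Context (R : realType).
Local Notation leb := (@lebesgue_measure R).
Import HBNNSimple.

Lemma sint_dil (c : R) (c0 : (0 < c)%R) (h : {nnsfun measurableTypeR R >-> R}) :
  sintegral leb (dil_nnsfun c h) = c%:E * sintegral leb h.
Proof.
rewrite /sintegral ge0_mule_fsumr; last by move=> v; exact: nnsfun_mulemu_ge0.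
apply: eq_fsbigr => v _.
have -> : (dil_nnsfun c h) @^-1` [set v] = (fun x => x / c)%R @^-1` (h @^-1` [set v]) by [].
rewrite leb_dil//; last exact: (measurable_funPTI h (measurable_set1 v)).
by rewrite muleCA.
Qed.

Lemma sup_int_dil_le (c : R) (c0 : (0 < c)%R) (F : R -> \bar R) :
  (forall x, (0 < x)%R -> 0 <= F x) ->
  \int[leb]_(x in `]0%R, +oo[) F (x * c)%R <= (c^-1)%:E * \int[leb]_(x in `]0%R, +oo[) F x.
Proof.
move=> F0.
have F0' : forall x, `]0%R, +oo[ x -> 0 <= F x.
  by move=> x; rewrite /= in_itv/= andbT; exact: F0.
have Fc0 : forall x, `]0%R, +oo[ x -> 0 <= F (x * c)%R.
  by move=> x; rewrite /= in_itv/= andbT => x0; apply: F0; rewrite mulr_gt0.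
rewrite (@ge0_integralE _ _ _ leb _ _ Fc0) (@ge0_integralE _ _ _ leb _ _ F0').
apply: ge_ereal_sup => _ [h hf <-].
have -> : sintegral leb h = (c^-1)%:E * sintegral leb (dil_nnsfun c h).
  by rewrite sint_dil// muleA -EFinM mulVf ?gt_eqF// mul1e.
rewrite lee_pmul2l ?lte_fin ?invr_gt0//.
apply: ereal_sup_ubound; exists (dil_nnsfun c h) => //= x.
have := hf (x / c)%R; rewrite /patch /= /dilf mulrVK ?unitfE ?gt_eqF//.
have -> : ((x / c)%R \in `]0%R, +oo[) = (x \in `]0%R, +oo[).
  apply/idP/idP => /set_mem; rewrite /= !in_itv/= !andbT => H1; apply/mem_set;
    rewrite /= in_itv/= andbT.
    by move: H1; rewrite pmulr_lgt0// invr_gt0.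
  by rewrite divr_gt0.
by [].
Qed.

Lemma sup_int_dil (c : R) (c0 : (0 < c)%R) (F : R -> \bar R) :
  (forall x, (0 < x)%R -> 0 <= F x) ->
  \int[leb]_(x in `]0%R, +oo[) F (x * c)%R = (c^-1)%:E * \int[leb]_(x in `]0%R, +oo[) F x.
Proof.
move=> F0; apply/eqP; rewrite eq_le sup_int_dil_le//=.
have ci0 : (0 < c^-1)%R by rewrite invr_gt0.
have := @sup_int_dil_le _ ci0 (fun x => F (x * c)%R).
have -> : (fun x => F (x * c^-1 * c)%R) = F.
  by apply/funext => x; rewrite mulrVK ?unitfE ?gt_eqF.
move=> /(_ (fun x x0 => F0 _ (mulr_gt0 x0 c0))).
rewrite invrK => H1.
by rewrite -(@lee_pmul2l _ c%:E) ?lte_fin// muleA -EFinM divff ?gt_eqF// mul1e.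
Qed.
End D.
Section E.
Local Open Scope ereal_scope.
Context (R : realType).
Local Notation leb := (@lebesgue_measure R).

Lemma int_Rk_ge0 k (F : seq R -> \bar R) : (forall s, 0 <= F s) -> 0 <= int_Rk k F.
Proof.
elim: k F => [|k IH] F F0 //=; apply: integral_ge0 => x _; exact: IH.
Qed.

Lemma int_Rk_le k (F G : seq R -> \bar R) : (forall s, 0 <= F s) ->
  (forall s, F s <= G s) -> int_Rk k F <= int_Rk k G.
Proof.
elim: k F G => [|k IH] F G F0 FG //=.
apply: sup_le_int => // x _.
- exact: int_Rk_ge0.
- by apply: int_Rk_ge0 => s; exact: le_trans (F0 _) (FG _).
- exact: IH.
Qed.

Lemma int_Rk_scale k (F : seq R -> \bar R) (r : R) : (0 < r)%R ->
  (forall s, 0 <= F s) -> int_Rk k (fun s => r%:E * F s) = r%:E * int_Rk k F.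
Proof.
move=> r0; elim: k F => [|k IH] F F0 //=.
under eq_integral do rewrite IH//.
by rewrite sup_int_scale// => x _; exact: int_Rk_ge0.
Qed.

Lemma int_Rk_box k (F : seq R -> \bar R) (c : \bar R) : 0 <= c ->
  (forall s, 0 <= F s) ->
  (forall s, size s = k -> all (fun x => `|x| <= 1)%R s -> c <= F s) ->
  (2 ^+ k)%:E * c <= int_Rk k F.
Proof.
move=> c0; elim: k F => [|k IH] F F0 Fc /=; first by rewrite expr0 mul1e; exact: Fc.
have m11 : measurable (`[(-1)%R, 1%R]%classic : set R) by [].
apply: (@le_trans _ _ (\int[leb]_(x in `[(-1)%R, 1%R]) ((2 ^+ k)%:E * c))).
  have L : leb `[(-1)%R, 1%R] = 2%:E.
    rewrite lebesgue_measure_itv/= lte_fin ifT; last by rewrite -subr_gt0 opprK.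
    by rewrite -EFinD opprK.
  by rewrite integral_cst// [X in _ <= _ * X]L muleAC -EFinM exprSr.
apply: sup_le_int => //.
- by move=> x _; rewrite mule_ge0// lee_fin exprn_ge0.
- by move=> x _; exact: int_Rk_ge0.
- move=> x; rewrite /= in_itv/= => x1; apply: IH => // s sk sa.
  apply: Fc; first by rewrite /= sk.
  by rewrite /= sa andbT ler_norml.
Qed.
End E.
Section F.
Local Open Scope ereal_scope.
Context d (T : measurableType d) (R : realType).
Variable mu : {measure set T -> \bar R}.

Lemma int_pos (D : set T) (u v : T -> \bar R) : measurable D ->
  measurable_fun D u -> measurable_fun D v ->
  (forall x, D x -> 0 <= u x) -> (forall x, D x -> 0 <= v x) ->
  (forall x, D x -> u x != 0 -> v x != 0) ->
  0 < \int[mu]_(x in D) u x -> 0 < \int[mu]_(x in D) v x.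
Proof.
move=> mD mu_ mv u0 v0 uv ipos.
rewrite lt0e integral_ge0// andbT; apply/negP => /eqP iv0.
have : \int[mu]_(x in D) `|v x| = 0.
  by rewrite -iv0; apply: eq_integral => x /set_mem Dx; rewrite gee0_abs// v0.
move=> /(ae_eq_integral_abs mu mD mv) ae0.
have aeu : ae_eq mu D u (cst 0).
  apply: filterS ae0 => x H1 Dx; have /= := H1 Dx.
  by apply: contra_eq => /(uv x Dx).
move: ipos; rewrite (@ae_eq_integral _ _ _ mu D (cst 0) u mD mu_ _ aeu)//.
by rewrite integral0 ltxx.
Qed.
End F.
Section G.
Local Open Scope ereal_scope.
Context (R : realType).

Lemma pdf_mono (x x' : R) : (`|x| <= `|x'|)%R ->
  (normal_pdf 0 1 x' <= normal_pdf 0 1 x)%R.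
Proof.
move=> xx; rewrite /normal_pdf oner_eq0 /=.
apply: ler_wpM2l; first exact: normal_peak_ge0.
rewrite /normal_fun ler_expR !subr0 !mulNr lerN2 ler_pM2r ?invr_gt0; last first.
  by rewrite expr1n mulr2n addr_gt0 ?ltr01.
rewrite -(real_normK (num_real x)) -(real_normK (num_real x')).
by rewrite ler_pXn2r// ?nnegrE.
Qed.

Lemma pdf_gt0 (x : R) : (0 < normal_pdf 0 1 x)%R.
Proof.
rewrite /normal_pdf oner_eq0 /= mulr_gt0 ?expR_gt0//.
by apply: normal_peak_gt0; rewrite oner_eq0.
Qed.

Variable H : R.-pker R ~> R.

Lemma smn_ge0 z dl : 0 <= smn_density H z dl.
Proof.
apply: integral_ge0 => t _; rewrite lee_fin mulr_ge0 ?sqrtr_ge0//.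
exact: normal_pdf_ge0.
Qed.

Lemma smn_mono z z' dl : (`|z| <= `|z'|)%R ->
  smn_density H z' dl <= smn_density H z dl.
Proof.
move=> zz; apply: sup_le_int => // t _.
- by rewrite lee_fin mulr_ge0 ?sqrtr_ge0// normal_pdf_ge0.
- by rewrite lee_fin mulr_ge0 ?sqrtr_ge0// normal_pdf_ge0.
rewrite lee_fin ler_wpM2l ?sqrtr_ge0// pdf_mono// !normrM.
by rewrite ler_wpM2l.
Qed.

Definition smn_int z (t : R) : R := (Num.sqrt t * normal_pdf 0 1 (Num.sqrt t * z))%R.

Lemma smn_int_cont z : continuous (smn_int z).
Proof.
move=> t; apply: cvgM; first exact: sqrt_continuous.
apply: (@continuous_comp _ _ _ (fun t => Num.sqrt t * z)%R (normal_pdf 0 1) t).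
  apply: cvgM; first exact: sqrt_continuous.
  exact: cvg_cst.
by apply: continuous_normal_pdf; rewrite oner_eq0.
Qed.

Lemma smn_int_meas z : measurable_fun [set: R] (smn_int z).
Proof. by apply: continuous_measurable_fun; exact: smn_int_cont. Qed.

Lemma smn_pos z dl : H dl `]0%R, +oo[ = 1 -> 0 < smn_density H z dl.
Proof.
move=> H1; rewrite /smn_density.
apply: (@int_pos _ _ _ (H dl) _ (fun=> 1)) => //.
- apply/measurable_EFinP; apply: measurable_funTS; exact: smn_int_meas.
- by move=> t _; rewrite lee_fin mulr_ge0 ?sqrtr_ge0// normal_pdf_ge0.
- move=> t; rewrite /= in_itv/= andbT => t0 _.
  by rewrite eqe gt_eqF// mulr_gt0 ?sqrtr_gt0 ?pdf_gt0.
by rewrite integral_cst//= mul1e H1 lte01.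
Qed.

Lemma smn_meas z : measurable_fun [set: R] (fun dl => smn_density H z dl).
Proof.
rewrite /smn_density.
under eq_fun do rewrite integral_mkcond.
apply: (@measurable_fun_integral_kernel _ _ _ _ _ H).
- by move=> U mU; exact: measurable_kernel.
- move=> t; rewrite /patch; case: ifPn => // _.
  by rewrite lee_fin mulr_ge0 ?sqrtr_ge0// normal_pdf_ge0.
apply/(measurable_restrictT _ _).1 => //.
apply/measurable_EFinP; apply: measurable_funTS; exact: smn_int_meas.
Qed.
End G.
Section Gen.
Local Open Scope ereal_scope.
Context (R : realType).

Lemma sup_int_scale0 d (T : measurableType d) (mu : {measure set T -> \bar R})
  (D : set T) (f : T -> \bar R) (r : R) : (0 <= r)%R ->
  (forall x, D x -> 0 <= f x) ->
  \int[mu]_(x in D) (r%:E * f x) = r%:E * \int[mu]_(x in D) f x.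
Proof.
rewrite le0r => /orP[/eqP->|r0] f0; last exact: sup_int_scale.
by rewrite mul0e; under eq_integral do rewrite mul0e; rewrite integral0.
Qed.

Lemma int_Rk_scale0 k (F : seq R -> \bar R) (r : R) : (0 <= r)%R ->
  (forall s, 0 <= F s) -> int_Rk k (fun s => r%:E * F s) = r%:E * int_Rk k F.
Proof.
move=> r0; elim: k F => [|k IH] F F0 //=.
under eq_integral do rewrite IH//.
by rewrite sup_int_scale0// => x _; exact: int_Rk_ge0.
Qed.

Lemma lee_prod_ord n (F G : 'I_n -> \bar R) : (forall i, 0 <= F i) ->
  (forall i, F i <= G i) -> \prod_(i < n) F i <= \prod_(i < n) G i.
Proof.
move=> F0 FG.
suff : 0 <= \prod_(i < n) F i <= \prod_(i < n) G i by case/andP.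
apply: (big_ind2 (fun x y => 0 <= x <= y)).
- by rewrite lee01 lexx.
- move=> x1 x2 y1 y2 /andP[x10 x12] /andP[y10 y12].
  by rewrite mule_ge0//= lee_pmul.
- by move=> i _; rewrite F0 FG.
Qed.

Lemma prode_gt0_ord n (F : 'I_n -> \bar R) : (forall i, 0 < F i) ->
  0 < \prod_(i < n) F i.
Proof.
move=> F0; apply: (big_ind (fun x => 0 < x)); first by rewrite lte01.
  by move=> x y x0 y0; rewrite mule_gt0.
by move=> i _; exact: F0.
Qed.

Lemma abs_div_le (z u v : R) : (0 < u)%R -> (u <= v)%R -> (`|z / v| <= `|z / u|)%R.
Proof.
move=> u0 uv; have v0 : (0 < v)%R by exact: lt_le_trans uv.
rewrite !normrM !normrV ?unitfE ?gt_eqF// (gtr0_norm u0) (gtr0_norm v0).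
by rewrite ler_wpM2l// lef_pV2 ?posrE.
Qed.
End Gen.
Section M1.
Local Open Scope ereal_scope.
Context (R : realType) (n : nat) (H : R.-pker R ~> R) (a b : R -> R).
Local Notation f := (smn_density H).

Lemma tp_le_max (sg dl gm z : R) : (0 < sg)%R -> (0 < a gm)%R -> (0 < b gm)%R ->
  tp_density f a b 0 sg dl gm z <=
  (2 / (sg * (a gm + b gm)))%:E * f (z / (sg * Num.max (a gm) (b gm)))%R dl.
Proof.
move=> s0 a0 b0; rewrite /tp_density subr0.
apply: lee_wpmul2l; first by rewrite lee_fin divr_ge0// ltW// mulr_gt0// addr_gt0.
case: ifPn => _; apply: smn_mono; apply: abs_div_le; rewrite ?mulr_gt0//;
  rewrite ler_pM2l//; by rewrite comparable_le_max ?real_comparable ?num_real// lexx ?orbT.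
Qed.

Lemma tp_ge_min (sg dl gm z : R) : (0 < sg)%R -> (0 < a gm)%R -> (0 < b gm)%R ->
  (2 / (sg * (a gm + b gm)))%:E * f (z / (sg * Num.min (a gm) (b gm)))%R dl <=
  tp_density f a b 0 sg dl gm z.
Proof.
move=> s0 a0 b0; rewrite /tp_density subr0.
apply: lee_wpmul2l; first by rewrite lee_fin divr_ge0// ltW// mulr_gt0// addr_gt0.
case: ifPn => _; apply: smn_mono; apply: abs_div_le; rewrite ?mulr_gt0 ?lt_min ?a0 ?b0//;
  rewrite ler_pM2l//; by rewrite comparable_ge_min ?real_comparable ?num_real// lexx ?orbT.
Qed.

Variables (p : nat) (X : 'M[R]_(n, p)) (y : 'I_n -> R) (q : R) (pd pg : R -> R).

Definition TPint gm dl sg (beta : seq R) :=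
  (\prod_(j < n) tp_density f a b 0%R sg dl gm (y j - lin_pred X beta j)%R) *
      (sg `^ (- q) * pd dl * pg gm)%:E.
Definition Symint dl sg (beta : seq R) :=
  (\prod_(j < n) ((sg^-1)%:E * f ((y j - lin_pred X beta j) / sg)%R dl)) *
      (sg `^ (- q) * pd dl)%:E.
Definition kap gm c := ((2 * c / (a gm + b gm)) ^+ n * c `^ q * pg gm)%R.

Lemma prod_cstE (u : R) (F : 'I_n -> \bar R) :
  \prod_(j < n) (u%:E * F j) = (u ^+ n)%:E * \prod_(j < n) F j.
Proof.
by rewrite big_split /= prodEFin prodr_const card_ord.
Qed.

Lemma rearr gm dl sg beta c : (0 < sg)%R -> (0 < c)%R -> (0 < a gm + b gm)%R ->
  (\prod_(j < n) ((2 / (sg * (a gm + b gm)))%:E * f ((y j - lin_pred X beta j) / (sg * c))%R dl)) *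
      (sg `^ (- q) * pd dl * pg gm)%:E
  = (kap gm c)%:E * Symint dl (sg * c) beta.
Proof.
move=> s0 c0 A0; rewrite /Symint !prod_cstE.
set P := \prod_(j < n) _.
rewrite muleAC -EFinM muleC.
rewrite [X in _ = _ * X]muleAC -EFinM muleA -EFinM [RHS]muleC.
congr (P * _%:E).
rewrite powRM ?ltW// powRN.
have t0 : (c `^ q != 0)%R by rewrite gt_eqF// powR_gt0.
rewrite /kap.
set t := (c `^ q)%R; set w := (sg `^ (- q))%R.
have e : (2 / (sg * (a gm + b gm)) = 2 * c / (a gm + b gm) * (sg * c)^-1)%R.
  by field; rewrite !gt_eqF.
rewrite e exprMn (powRN c) -/t.
by field; rewrite t0 !gt_eqF// ?powR_gt0// mulr_gt0.
Qed.


Lemma tp_ge0 sg dl gm z : (0 < sg)%R -> (0 < a gm)%R -> (0 < b gm)%R ->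
  0 <= tp_density f a b 0 sg dl gm z.
Proof.
move=> s0 a0 b0; rewrite /tp_density mule_ge0//; last by case: ifPn => _; exact: smn_ge0.
by rewrite lee_fin divr_ge0// ltW// mulr_gt0// addr_gt0.
Qed.

Lemma TPint_ge0 gm dl sg beta : (0 < sg)%R -> (0 < a gm)%R -> (0 < b gm)%R ->
  (0 <= pd dl)%R -> (0 <= pg gm)%R -> 0 <= TPint gm dl sg beta.
Proof.
move=> s0 a0 b0 pd0 pg0; rewrite /TPint mule_ge0//.
  by apply: prode_ge0 => j _; exact: tp_ge0.
by rewrite lee_fin !mulr_ge0// powR_ge0.
Qed.

Lemma Symint_ge0 dl sg beta : (0 < sg)%R -> (0 <= pd dl)%R -> 0 <= Symint dl sg beta.
Proof.
move=> s0 pd0; rewrite /Symint mule_ge0//; last by rewrite lee_fin mulr_ge0// powR_ge0.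
apply: prode_ge0 => j _; rewrite mule_ge0 ?smn_ge0//.
by rewrite lee_fin invr_ge0 ltW.
Qed.

Lemma TPint_le gm dl sg beta : (0 < sg)%R -> (0 < a gm)%R -> (0 < b gm)%R ->
  (0 <= pd dl)%R -> (0 <= pg gm)%R ->
  TPint gm dl sg beta <= (kap gm (Num.max (a gm) (b gm)))%:E *
     Symint dl (sg * Num.max (a gm) (b gm)) beta.
Proof.
move=> s0 a0 b0 pd0 pg0; rewrite -rearr//; last 2 first.
  by rewrite lt_max a0.
  by rewrite addr_gt0.
rewrite /TPint; apply: lee_wpmul2r; first by rewrite lee_fin !mulr_ge0// powR_ge0.
apply: lee_prod_ord => j; first exact: tp_ge0.
exact: tp_le_max.
Qed.

Lemma TPint_ge gm dl sg beta : (0 < sg)%R -> (0 < a gm)%R -> (0 < b gm)%R ->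
  (0 <= pd dl)%R -> (0 <= pg gm)%R ->
  (kap gm (Num.min (a gm) (b gm)))%:E *
     Symint dl (sg * Num.min (a gm) (b gm)) beta <= TPint gm dl sg beta.
Proof.
move=> s0 a0 b0 pd0 pg0; rewrite -rearr//; last 2 first.
  by rewrite lt_min a0.
  by rewrite addr_gt0.
rewrite /TPint; apply: lee_wpmul2r; first by rewrite lee_fin !mulr_ge0// powR_ge0.
apply: lee_prod_ord => j.
  by rewrite mule_ge0 ?smn_ge0// lee_fin divr_ge0// ltW// mulr_gt0// addr_gt0.
exact: tp_ge_min.
Qed.

Local Notation leb := (@lebesgue_measure R).

Lemma lvl_le (D : set R) (F G : R -> \bar R) (K : R) : (0 <= K)%R ->
  (forall x, D x -> 0 <= F x) -> (forall x, D x -> 0 <= G x) ->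
  (forall x, D x -> F x <= K%:E * G x) ->
  \int[leb]_(x in D) F x <= K%:E * \int[leb]_(x in D) G x.
Proof.
move=> K0 F0 G0 FG; rewrite -sup_int_scale0//; apply: sup_le_int => // x Dx.
by rewrite mule_ge0// G0.
Qed.

Lemma lvl_ge (D : set R) (F G : R -> \bar R) (K : R) : (0 <= K)%R ->
  (forall x, D x -> 0 <= F x) -> (forall x, D x -> 0 <= G x) ->
  (forall x, D x -> K%:E * G x <= F x) ->
  K%:E * \int[leb]_(x in D) G x <= \int[leb]_(x in D) F x.
Proof.
move=> K0 F0 G0 FG; rewrite -sup_int_scale0//; apply: sup_le_int => // x Dx.
by rewrite mule_ge0// G0.
Qed.

Lemma pos_itv (x : R) : `]0%R, +oo[ x -> (0 < x)%R.
Proof. by rewrite /= in_itv/= andbT. Qed.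

Lemma sig_le gm dl c : (0 < c)%R -> (0 <= kap gm c)%R -> (0 <= pd dl)%R ->
  (forall sg beta, (0 < sg)%R -> 0 <= TPint gm dl sg beta) ->
  (forall sg beta, (0 < sg)%R -> TPint gm dl sg beta <= (kap gm c)%:E * Symint dl (sg * c) beta) ->
  \int[leb]_(sg in `]0%R, +oo[) int_Rk p (TPint gm dl sg) <=
  (kap gm c / c)%:E * \int[leb]_(sg in `]0%R, +oo[) int_Rk p (Symint dl sg).
Proof.
move=> c0 k0 pd0 T0 Tle.
apply: (@le_trans _ _ ((kap gm c)%:E * \int[leb]_(sg in `]0%R, +oo[) int_Rk p (Symint dl (sg * c)))).
  apply: lvl_le => // sg /pos_itv s0.
  - by apply: int_Rk_ge0 => beta; exact: T0.
  - by apply: int_Rk_ge0 => beta; apply: Symint_ge0 => //; rewrite mulr_gt0.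
  - rewrite -int_Rk_scale0//; last by move=> beta; apply: Symint_ge0 => //; rewrite mulr_gt0.
    apply: int_Rk_le => beta; [exact: T0|exact: Tle].
rewrite (@sup_int_dil _ c c0 (fun s => int_Rk p (Symint dl s))).
  by rewrite muleA -EFinM.
by move=> x x0; apply: int_Rk_ge0 => beta; exact: Symint_ge0.
Qed.

Lemma sig_ge gm dl c : (0 < c)%R -> (0 <= kap gm c)%R -> (0 <= pd dl)%R ->
  (forall sg beta, (0 < sg)%R -> 0 <= TPint gm dl sg beta) ->
  (forall sg beta, (0 < sg)%R -> (kap gm c)%:E * Symint dl (sg * c) beta <= TPint gm dl sg beta) ->
  (kap gm c / c)%:E * \int[leb]_(sg in `]0%R, +oo[) int_Rk p (Symint dl sg) <=
  \int[leb]_(sg in `]0%R, +oo[) int_Rk p (TPint gm dl sg).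
Proof.
move=> c0 k0 pd0 T0 Tle.
apply: (@le_trans _ _ ((kap gm c)%:E * \int[leb]_(sg in `]0%R, +oo[) int_Rk p (Symint dl (sg * c)))); last first.
  apply: lvl_ge => // sg /pos_itv s0.
  - by apply: int_Rk_ge0 => beta; exact: T0.
  - by apply: int_Rk_ge0 => beta; apply: Symint_ge0 => //; rewrite mulr_gt0.
  - rewrite -int_Rk_scale0//; last by move=> beta; apply: Symint_ge0 => //; rewrite mulr_gt0.
    apply: int_Rk_le => beta; last exact: Tle.
    by rewrite mule_ge0// ?lee_fin// Symint_ge0// mulr_gt0.
rewrite (@sup_int_dil _ c c0 (fun s => int_Rk p (Symint dl s))).
  by rewrite muleA -EFinM.
by move=> x x0; apply: int_Rk_ge0 => beta; exact: Symint_ge0.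
Qed.

Lemma kap_div gm c : (0 < c)%R -> (0 < a gm + b gm)%R ->
  (kap gm c / c = 2 ^+ n * (c `^ (n%:R + q - 1) / (a gm + b gm) ^+ n * pg gm))%R.
Proof.
move=> c0 A0; rewrite /kap.
rewrite powRD; last by apply/implyP => _; rewrite gt_eqF.
rewrite powRD; last by apply/implyP => _; rewrite gt_eqF.
rewrite powR_mulrn ?ltW// powR_inv1 ?ltW//.
rewrite !exprMn exprVn; set t := (c `^ q)%R.
have An : ((a gm + b gm) ^+ n != 0)%R by rewrite expf_neq0// gt_eqF.
field.
by rewrite An gt_eqF.
Qed.

Variable Delta : set R.
Definition wfun (mm : R -> R -> R) gm :=
  (mm (a gm) (b gm) `^ (n%:R + q - 1) / (a gm + b gm) ^+ n * pg gm)%R.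


Lemma inner_ge0 gm dl : (0 < a gm)%R -> (0 < b gm)%R -> (0 <= pd dl)%R -> (0 <= pg gm)%R ->
  0 <= \int[leb]_(sg in `]0%R, +oo[) int_Rk p (TPint gm dl sg).
Proof.
move=> a0 b0 pd0 pg0; apply: integral_ge0 => sg /pos_itv s0.
by apply: int_Rk_ge0 => beta; exact: TPint_ge0.
Qed.

Lemma inner_sym_ge0 dl : (0 <= pd dl)%R ->
  0 <= \int[leb]_(sg in `]0%R, +oo[) int_Rk p (Symint dl sg).
Proof.
move=> pd0; apply: integral_ge0 => sg /pos_itv s0.
by apply: int_Rk_ge0 => beta; exact: Symint_ge0.
Qed.

Lemma gam_le gm : (0 < a gm)%R -> (0 < b gm)%R -> (0 <= pg gm)%R ->
  (forall dl, Delta dl -> (0 <= pd dl)%R) ->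
  \int[leb]_(dl in Delta) \int[leb]_(sg in `]0%R, +oo[) int_Rk p (TPint gm dl sg) <=
  (2 ^+ n * wfun Num.max gm)%:E *
    \int[leb]_(dl in Delta) \int[leb]_(sg in `]0%R, +oo[) int_Rk p (Symint dl sg).
Proof.
move=> a0 b0 pg0 pd0.
have c0 : (0 < Num.max (a gm) (b gm))%R by rewrite lt_max a0.
have A0 : (0 < a gm + b gm)%R by rewrite addr_gt0.
have k0 : (0 <= kap gm (Num.max (a gm) (b gm)))%R.
  by rewrite /kap !mulr_ge0 ?powR_ge0// exprn_ge0// divr_ge0 ?mulr_ge0 ?ltW.
rewrite /wfun -kap_div//.
apply: lvl_le.
- exact: divr_ge0 k0 (ltW c0).
- by move=> dl /pd0 ?; exact: inner_ge0.
- by move=> dl /pd0 ?; exact: inner_sym_ge0.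
move=> dl /pd0 pd0'; apply: sig_le => //.
- by move=> sg beta s0; exact: TPint_ge0.
- by move=> sg beta s0; exact: TPint_le.
Qed.

Lemma gam_ge gm : (0 < a gm)%R -> (0 < b gm)%R -> (0 <= pg gm)%R ->
  (forall dl, Delta dl -> (0 <= pd dl)%R) ->
  (2 ^+ n * wfun Num.min gm)%:E *
    \int[leb]_(dl in Delta) \int[leb]_(sg in `]0%R, +oo[) int_Rk p (Symint dl sg) <=
  \int[leb]_(dl in Delta) \int[leb]_(sg in `]0%R, +oo[) int_Rk p (TPint gm dl sg).
Proof.
move=> a0 b0 pg0 pd0.
have c0 : (0 < Num.min (a gm) (b gm))%R by rewrite lt_min a0.
have A0 : (0 < a gm + b gm)%R by rewrite addr_gt0.
have k0 : (0 <= kap gm (Num.min (a gm) (b gm)))%R.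
  by rewrite /kap !mulr_ge0 ?powR_ge0// exprn_ge0// divr_ge0 ?mulr_ge0 ?ltW.
rewrite /wfun -kap_div//.
apply: lvl_ge.
- exact: divr_ge0 k0 (ltW c0).
- by move=> dl /pd0 ?; exact: inner_ge0.
- by move=> dl /pd0 ?; exact: inner_sym_ge0.
move=> dl /pd0 pd0'; apply: sig_ge => //.
- by move=> sg beta s0; exact: TPint_ge0.
- by move=> sg beta s0; exact: TPint_ge.
Qed.

Definition Kc : R := (1 + \sum_(j < n) (`|y j| + \sum_(i < p) `|X j i|))%R.

Lemma Kc_gt0 : (0 < Kc)%R.
Proof.
rewrite /Kc ltr_pwDl ?ltr01// sumr_ge0// => j _.
by rewrite addr_ge0// sumr_ge0.
Qed.

Lemma lin_bound beta j : size beta = p -> all (fun x => `|x| <= 1)%R beta ->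
  (`|y j - lin_pred X beta j| <= Kc)%R.
Proof.
move=> sz ab.
apply: (le_trans (ler_normB _ _)).
apply: (@le_trans _ _ (`|y j| + \sum_(i < p) `|X j i|)%R).
  rewrite lerD2l /lin_pred; apply: (le_trans (ler_norm_sum _ _ _)).
  apply: ler_sum => i _; rewrite normrM ler_piMr//.
  have /allP := ab; apply; apply: mem_nth; rewrite sz; exact: ltn_ord.
rewrite /Kc (bigD1 j)//= addrA.
have T0 : (0 <= \sum_(i < n | i != j) (`|y i| + \sum_(i0 < p) `|X i i0|))%R.
  by rewrite sumr_ge0// => k _; rewrite addr_ge0// sumr_ge0.
lra.
Qed.

Definition cfun dl := (\prod_(j < n) ((2^-1)%:E * f Kc dl)) * ((2 `^ (- q) * pd dl)%R)%:E.

Lemma cfun_ge0 dl : (0 <= pd dl)%R -> 0 <= cfun dl.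
Proof.
move=> pd0; rewrite /cfun mule_ge0//; last by rewrite lee_fin mulr_ge0// powR_ge0.
by apply: prode_ge0 => j _; rewrite mule_ge0 ?smn_ge0// lee_fin invr_ge0.
Qed.

Lemma Symint_box dl sg beta : (0 <= q)%R -> (0 <= pd dl)%R -> (1 <= sg <= 2)%R ->
  size beta = p -> all (fun x => `|x| <= 1)%R beta -> cfun dl <= Symint dl sg beta.
Proof.
move=> q0 pd0 /andP[s1 s2] sz ab.
have s0 : (0 < sg)%R by exact: lt_le_trans ltr01 s1.
rewrite /cfun /Symint; apply: lee_pmul.
- by apply: prode_ge0 => j _; rewrite mule_ge0 ?smn_ge0// lee_fin invr_ge0.
- by rewrite lee_fin mulr_ge0// powR_ge0.
- apply: lee_prod_ord => j; first by rewrite mule_ge0 ?smn_ge0// lee_fin invr_ge0.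
  apply: lee_pmul => //; first exact: smn_ge0.
    by rewrite lee_fin lef_pV2 ?posrE.
  apply: smn_mono; rewrite (gtr0_norm Kc_gt0).
  apply: le_trans (lin_bound j sz ab).
  rewrite normrM normrV ?unitfE ?gt_eqF// (gtr0_norm s0).
  by rewrite ler_pdivrMr// ler_peMr.
- rewrite lee_fin ler_wpM2r// !powRN lef_pV2 ?posrE ?powR_gt0//.
  by apply: ge0_ler_powR => //; rewrite nnegrE ltW.
Qed.

Lemma sig_box dl : (0 <= q)%R -> (0 <= pd dl)%R ->
  (2 ^+ p)%:E * cfun dl <= \int[leb]_(sg in `]0%R, +oo[) int_Rk p (Symint dl sg).
Proof.
move=> q0 pd0.
have m12 : measurable (`[1%R, 2%R]%classic : set R) by [].
apply: (@le_trans _ _ (\int[leb]_(sg in `[1%R, 2%R]) ((2 ^+ p)%:E * cfun dl))).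
  have L : leb `[1%R, 2%R] = 1.
    rewrite lebesgue_measure_itv/= lte_fin ifT; last by rewrite ltr1n.
    by rewrite -EFinD; congr EFin; rewrite -[2%R]natr1 addrK.
  by rewrite integral_cst// [X in _ <= _ * X]L mule1.
apply: sup_le_int.
- by move=> x; rewrite /= !in_itv/= andbT => /andP[x1 _]; exact: lt_le_trans ltr01 x1.
- by move=> x _; rewrite mule_ge0 ?lee_fin ?exprn_ge0// cfun_ge0.
- by move=> x /pos_itv x0; apply: int_Rk_ge0 => beta; exact: Symint_ge0.
move=> x; rewrite /= in_itv/= => x12.
apply: int_Rk_box; first exact: cfun_ge0.
  by move=> beta; apply: Symint_ge0 => //; case/andP: x12 => x1 _; exact: lt_le_trans ltr01 x1.
by move=> beta sz ab; exact: Symint_box.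
Qed.

Lemma emeas_prod (D : set R) (g : R -> \bar R) k : measurable_fun D g ->
  measurable_fun D (fun x => \prod_(j < k) g x).
Proof.
move=> mg; elim: k => [|k IH].
  by under eq_fun do rewrite big_ord0; exact: measurable_cst.
under eq_fun do rewrite big_ord_recr /=.
exact: emeasurable_funM.
Qed.

Lemma M_pos : measurable Delta -> (0 <= q)%R ->
  (forall dl, Delta dl -> H dl `]0%R, +oo[ = 1) ->
  (forall dl, Delta dl -> (0 <= pd dl)%R) -> measurable_fun Delta pd ->
  \int[leb]_(dl in Delta) (pd dl)%:E = 1 ->
  0 < \int[leb]_(dl in Delta) \int[leb]_(sg in `]0%R, +oo[) int_Rk p (Symint dl sg).
Proof.
move=> mD q0 H1 pd0 mpd ipd.
apply: (@lt_le_trans _ _ (\int[leb]_(dl in Delta) ((2 ^+ p)%:E * cfun dl))).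
  apply: (@int_pos _ _ _ leb _ (fun dl => (pd dl)%:E)) => //.
  - exact/measurable_EFinP.
  - apply: emeasurable_funM; first exact: measurable_cst.
    apply: emeasurable_funM; first by apply: emeas_prod; apply: emeasurable_funM;
      [exact: measurable_cst| apply: measurable_funTS; exact: smn_meas].
    by apply/measurable_EFinP; apply: measurable_funM => //; exact: measurable_cst.
  - by move=> x /pd0 ?; rewrite mule_ge0 ?lee_fin ?exprn_ge0// cfun_ge0.
  - move=> x Dx; rewrite eqe => pdx; rewrite gt_eqF// mule_gt0// ?lte_fin ?exprn_gt0//.
    rewrite /cfun mule_gt0//.
      by apply: prode_gt0_ord => j; rewrite mule_gt0 ?lte_fin ?invr_gt0// smn_pos// H1.
    by rewrite lte_fin mulr_gt0 ?powR_gt0// lt0r pdx pd0.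
  - by rewrite ipd lte01.
apply: sup_le_int => //.
- by move=> x /pd0 ?; rewrite mule_ge0 ?lee_fin ?exprn_ge0// cfun_ge0.
- by move=> x /pd0 ?; exact: inner_sym_ge0.
by move=> x /pd0 ?; exact: sig_box.
Qed.

Lemma unbounded (I P : \bar R) : 0 < I -> (forall r, (0 < r)%R -> r%:E * I <= P) -> P = +oo.
Proof.
move=> I0 HP; case: P HP => [P| |] HP //.
- exfalso; case: I I0 HP => [i| |] I0 HP //.
  + have i0 : (0 < i)%R by rewrite -lte_fin.
    have r0 : (0 < (`|P| + 1) / i)%R by rewrite divr_gt0// ltr_wpDl.
    have := HP _ r0; rewrite -EFinM divfK ?gt_eqF// lee_fin.
    by apply/negP; rewrite -ltNge; apply: (le_lt_trans (ler_norm P)); rewrite ltrDl.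
  + by have := HP _ ltr01; rewrite mul1e.
- exfalso; have := HP _ ltr01; rewrite mul1e leeNy_eq => /eqP I1.
  by move: I0; rewrite I1.
Qed.

Lemma wfun_ge0 mm gm : (0 < a gm)%R -> (0 < b gm)%R -> (0 <= pg gm)%R -> (0 <= wfun mm gm)%R.
Proof.
move=> a0 b0 pg0; rewrite /wfun mulr_ge0// divr_ge0 ?powR_ge0//.
by rewrite exprn_ge0// addr_ge0 ?ltW.
Qed.

Lemma wfun_meas (Gamma : set R) : measurable Gamma ->
  (forall gm, Gamma gm -> (0 < a gm)%R /\ (0 < b gm)%R) ->
  measurable_fun Gamma a -> measurable_fun Gamma b -> measurable_fun Gamma pg ->
  measurable_fun Gamma (wfun Num.min).
Proof.
move=> mG ab ma mb mpg.
apply: (@eq_measurable_fun _ _ _ _ _ (fun gm => (Num.min (a gm) (b gm) `^ (n%:R + q - 1) *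
   ((a gm + b gm) ^+ n) `^ (-1) * pg gm)%R)).
  move=> gm /set_mem /ab [a0 b0]; rewrite /wfun powR_inv1//.
  by rewrite exprn_ge0// addr_ge0 ?ltW.
apply: measurable_funM => //; apply: measurable_funM.
  apply: (measurableT_comp (measurable_powR _)).
  exact: measurable_minr.
apply: (measurableT_comp (measurable_powR _)).
by apply: measurable_funX; exact: measurable_funD.
Qed.

Lemma main_thm (Gamma : set R) : 
  (0 <= q)%R ->
  (forall delta, Delta delta -> H delta `]0%R, +oo[ = 1%E) ->
  measurable Gamma ->
  (forall gamma, Gamma gamma -> (0 < a gamma)%R /\ (0 < b gamma)%R) ->
  measurable_fun Gamma a -> measurable_fun Gamma b ->
  measurable Delta ->
  (forall delta, Delta delta -> (0 <= pd delta)%R) ->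
  measurable_fun Delta pd ->
  (\int[leb]_(delta in Delta) (pd delta)%:E = 1)%E ->
  (forall gamma, Gamma gamma -> (0 <= pg gamma)%R) ->
  measurable_fun Gamma pg ->
  (\int[leb]_(gamma in Gamma) (pg gamma)%:E = 1)%E ->
  let M := \int[leb]_(dl in Delta) \int[leb]_(sg in `]0%R, +oo[) int_Rk p (Symint dl sg) in
  let P := \int[leb]_(gm in Gamma) \int[leb]_(dl in Delta)
             \int[leb]_(sg in `]0%R, +oo[) int_Rk p (TPint gm dl sg) in
  let Imin := \int[leb]_(gm in Gamma) (wfun Num.min gm)%:E in
  let Imax := \int[leb]_(gm in Gamma) (wfun Num.max gm)%:E in
  (P < +oo -> M < +oo /\ Imin < +oo) /\ (M < +oo /\ Imax < +oo -> P < +oo).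
Proof.
move=> q0 H1 mG ab ma mb mD pd0 mpd ipd pg0 mpg ipg M P Imin Imax.
have M0 : 0 <= M by apply: integral_ge0 => dl /pd0; exact: inner_sym_ge0.
have Mpos : 0 < M by exact: M_pos.
have S0 : forall gm, Gamma gm -> 0 <= \int[leb]_(dl in Delta)
             \int[leb]_(sg in `]0%R, +oo[) int_Rk p (TPint gm dl sg).
  move=> gm /[dup] /ab [a0 b0] /pg0 pgg; apply: integral_ge0 => dl /pd0 pd0'.
  exact: inner_ge0.
split.
- move=> Pfin.
  have Ipos : 0 < Imin.
    apply: (@int_pos _ _ _ leb _ (fun gm => (pg gm)%:E)) => //.
    + exact/measurable_EFinP.
    + by apply/measurable_EFinP; exact: wfun_meas.
    + by move=> gm /[dup] /ab [a0 b0] /pg0 ?; rewrite lee_fin wfun_ge0.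
    + move=> gm /[dup] /ab [a0 b0] /pg0 pgg; rewrite !eqe => pgn.
      rewrite /wfun mulf_neq0// mulf_neq0// ?invr_eq0 ?expf_neq0 ?gt_eqF ?addr_gt0//.
      by rewrite powR_gt0// lt_min a0.
    + by rewrite ipg lte01.
  have low : forall K : R, (0 <= K)%R -> K%:E <= M -> (2 ^+ n * K)%:E * Imin <= P.
    move=> K K0 KM; apply: lvl_ge.
    - by rewrite mulr_ge0// exprn_ge0.
    - exact: S0.
    - by move=> gm /[dup] /ab [a0 b0] /pg0 ?; rewrite lee_fin wfun_ge0.
    move=> gm /[dup] /ab [a0 b0] /[dup] /pg0 pgg Gg.
    apply: le_trans (gam_ge a0 b0 pgg pd0).
    rewrite -EFinM mulrAC EFinM lee_wpmul2l// lee_fin mulr_ge0 ?exprn_ge0//.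
    exact: wfun_ge0.
  have Mlt : M < +oo.
    rewrite ltNge leye_eq; apply/negP => /eqP Minf.
    have : P = +oo.
      apply: (unbounded Ipos) => r r0.
      have := low (r / 2 ^+ n)%R; rewrite mulrCA divff ?mulr1; last by rewrite expf_neq0.
      apply; first by rewrite divr_ge0 ?ltW// exprn_ge0.
      by rewrite Minf leey.
    by move=> Pinf; move: Pfin; rewrite Pinf ltxx.
  split => //.
  have Mfin : M \is a fin_num by rewrite ge0_fin_numE.
  rewrite ltNge leye_eq; apply/negP => /eqP Iinf.
  have := low (fine M); rewrite fineK// => /(_ (fine_ge0 M0) (lexx _)).
  rewrite Iinf gt0_muley; last by rewrite lte_fin mulr_gt0 ?exprn_gt0// fine_gt0// Mpos ltey_eq Mfin.
  by rewrite leye_eq => /eqP Pinf; move: Pfin; rewrite Pinf ltxx.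
- move=> [Mfin Ifin].
  have Mf : M \is a fin_num by rewrite ge0_fin_numE.
  apply: (@le_lt_trans _ _ ((2 ^+ n * fine M)%:E * Imax)).
    apply: lvl_le.
    - by rewrite mulr_ge0 ?exprn_ge0 ?fine_ge0.
    - exact: S0.
    - by move=> gm /[dup] /ab [a0 b0] /pg0 ?; rewrite lee_fin wfun_ge0.
    move=> gm /[dup] /ab [a0 b0] /[dup] /pg0 pgg Gg.
    apply: (le_trans (gam_le a0 b0 pgg pd0)).
    by rewrite -[X in _ * X <= _](fineK Mf) -!EFinM mulrAC.
  rewrite lte_mul_pinfty// lee_fin mulr_ge0 ?exprn_ge0 ?fine_ge0//.
Qed.
End M1.
Unset Implicit Arguments.
Theorem theorem3p1 (R : realType) (n p : nat) (X : 'M[R]_(n, p)) (y : 'I_n -> R)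
  (H : R.-pker R ~> R) (Delta Gamma : set R) (a b : R -> R) (q : R)
  (pi_delta pi_gamma : R -> R) :
  \rank X = p ->
  0 <= q ->
  (* mixing distributions live on R_+ *)
  (forall delta, Delta delta -> H delta `]0%R, +oo[ = 1%E) ->
  (* a, b : Gamma -> (0, oo), measurable *)
  measurable Gamma ->
  (forall gamma, Gamma gamma -> 0 < a gamma /\ 0 < b gamma) ->
  measurable_fun Gamma a -> measurable_fun Gamma b ->
  (* proper priors pi(delta) on Delta and pi(gamma) on Gamma *)
  measurable Delta ->
  (forall delta, Delta delta -> 0 <= pi_delta delta) ->
  measurable_fun Delta pi_delta ->
  (\int[@lebesgue_measure R]_(delta in Delta) (pi_delta delta)%:E = 1)%E ->
  (forall gamma, Gamma gamma -> 0 <= pi_gamma gamma) ->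
  measurable_fun Gamma pi_gamma ->
  (\int[@lebesgue_measure R]_(gamma in Gamma) (pi_gamma gamma)%:E = 1)%E ->
  let f := smn_density H in
  let cond_i := (post_mass_sym X y f q Delta pi_delta < +oo)%E in
  let cond_ii := (\int[@lebesgue_measure R]_(gamma in Gamma)
        ((Num.min (a gamma) (b gamma)) `^ (n%:R + q - 1) /
           (a gamma + b gamma) ^+ n * pi_gamma gamma)%:E < +oo)%E in
  let cond_iii := (\int[@lebesgue_measure R]_(gamma in Gamma)
        ((Num.max (a gamma) (b gamma)) `^ (n%:R + q - 1) /
           (a gamma + b gamma) ^+ n * pi_gamma gamma)%:E < +oo)%E in
  let proper := (post_mass_TP X y f a b q Delta Gamma pi_delta pi_gamma < +oo)%E in
  (proper -> cond_i /\ cond_ii) /\ (cond_i /\ cond_iii -> proper).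
Proof.
move=> _ q0 H1 mG ab ma mb mD pd0 mpd ipd pg0 mpg ipg.
exact: (@main_thm R n H a b p X y q pi_delta pi_gamma Delta Gamma q0 H1 mG ab ma mb mD pd0 mpd ipd pg0 mpg ipg).
Qed.
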